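(* Let $X$ be a totally disconnected compact metric space and let $I_X$ be the identity map of $X$. Then every point of $X$ is a topologically stable point and a GH-stable point of $I_X$.
   Context: For a homeomorphism $f$ of a compact metric space $(X,d)$: $\mathcal{O}_f(x)=\{f^n(x):n\in\mathbb{Z}\}$; $d_{C^0}(f,\bar f)=\sup_x d(f(x),\bar f(x))$. $x$ is a topologically stable point of $f$ if for every $\epsilon>0$ there is $\delta>0$ such that for every homeomorphism $g$ of $X$ with $d_{C^0}(f,g)\le\delta$ there is a continuous $h:\overline{\mathcal{O}_g(x)}\to X$ with $f\circ h=h\circ g$ and $d(h(z),z)\le\epsilon$ on $\overline{\mathcal{O}_g(x)}$. Hausdorff distance: $d^X_H(A,B)=\max\{\sup_{a\in A}\inf_{b\in B}d(a,b),\sup_{b\in B}\inf_{a\in A}d(a,b)\}$. A map $i:X\to Y$ between compact metric spaces is a $\delta$-isometry if $\max\{d^Y_H(i(X),Y),\sup_{x,x'}|d^Y(i(x),i(x'))-d^X(x,x')|\}<\delta$. For homeomorphisms $f$ of $X$ and $g$ of $Y$, $d_{GH^0}(f,g)=\inf\{\delta>0:$ there exist $\delta$-isometries $i:X\to Y$, $j:Y\to X$ with $\sup_x d^Y(g(i(x)),i(f(x)))<\delta$ and $\sup_y d^X(j(g(y)),f(j(y)))<\delta\}$. $x$ is a GH-stable point of $f$ if for every $\epsilon>0$ there is $\delta>0$ such that for every compact metric space $(Y,d^Y)$ and homeomorphism $g$ of $Y$ with $d_{GH^0}(f,g)<\delta$ there is an $\epsilon$-isometry $j:Y\to X$ such that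 for each $y\in j^{-1}(x)$ there is a continuous $h:\overline{\mathcal{O}_g(y)}\to X$ with $d(h(z),j(z))<\epsilon$ for all $z\in\overline{\mathcal{O}_g(y)}$ and $f\circ h=h\circ g$. *)

(* Defs.v *)
From Stdlib Require Import Reals List.
From Coquelicot Require Import Coquelicot.
Open Scope R_scope.

Section Defs.

Definition is_metric {X : Type} (d : X -> X -> R) : Prop :=
  (forall x y, 0 <= d x y) /\
  (forall x y, d x y = 0 <-> x = y) /\
  (forall x y, d x y = d y x) /\
  (forall x y z, d x z <= d x y + d y z).

Definition open_set {X : Type} (d : X -> X -> R) (U : X -> Prop) : Prop :=
  forall x, U x -> exists r, 0 < r /\ forall y, d x y < r -> U y.

Definition compact_metric {X : Type} (d : X -> X -> R) : Prop :=
  forall (I : Type) (U : I -> X -> Prop),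
    (forall i, open_set d (U i)) -> (forall x, exists i, U i x) ->
    exists l : list I, forall x, exists i, In i l /\ U i x.

Definition connected_subset {X : Type} (d : X -> X -> R) (A : X -> Prop) : Prop :=
  ~ exists U V : X -> Prop,
      open_set d U /\ open_set d V /\
      (forall x, A x -> U x \/ V x) /\
      (exists x, A x /\ U x) /\ (exists x, A x /\ V x) /\
      (forall x, A x -> U x -> V x -> False).

Definition totally_disconnected {X : Type} (d : X -> X -> R) : Prop :=
  forall A, connected_subset d A -> forall x y, A x -> A y -> x = y.

Definition continuous_on {X Y : Type} (dX : X -> X -> R) (dY : Y -> Y -> R)
  (A : X -> Prop) (f : X -> Y) : Prop :=
  forall x, A x -> forall eps, 0 < eps -> exists del, 0 < del /\
    forall y, A y -> dX x y < del -> dY (f x) (f y) < eps.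

Definition continuous_map {X Y : Type} (dX : X -> X -> R) (dY : Y -> Y -> R)
  (f : X -> Y) : Prop := continuous_on dX dY (fun _ => True) f.

Definition homeomorphism {X : Type} (d : X -> X -> R) (f : X -> X) : Prop :=
  continuous_map d d f /\
  exists g : X -> X, continuous_map d d g /\
    (forall x, g (f x) = x) /\ (forall x, f (g x) = x).

(* the orbit {f^n(x) : n in Z}: y = f^n x (n >= 0) or f^n y = x (i.e. y = f^{-n} x) *)
Definition orbit {X : Type} (f : X -> X) (x : X) : X -> Prop :=
  fun y => exists n : nat, y = Nat.iter n f x \/ Nat.iter n f y = x.

Definition closure {X : Type} (d : X -> X -> R) (A : X -> Prop) : X -> Prop :=
  fun y => forall eps, 0 < eps -> exists a, A a /\ d y a < eps.

Definition sup_over {T : Type} (F : T -> Rbar) : Rbar :=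
  Rbar_lub (fun r => exists t, r = F t).
Definition inf_over {T : Type} (F : T -> Rbar) : Rbar :=
  Rbar_glb (fun r => exists t, r = F t).
Definition rbar_max (a b : Rbar) : Rbar := Rbar_lub (fun r => r = a \/ r = b).

Definition dC0 {X : Type} (d : X -> X -> R) (f g : X -> X) : Rbar :=
  sup_over (fun x => Finite (d (f x) (g x))).

Definition hausdorff {Y : Type} (d : Y -> Y -> R) (A B : Y -> Prop) : Rbar :=
  rbar_max
    (sup_over (fun a : {a : Y | A a} =>
       inf_over (fun b : {b : Y | B b} => Finite (d (proj1_sig a) (proj1_sig b)))))
    (sup_over (fun b : {b : Y | B b} =>
       inf_over (fun a : {a : Y | A a} => Finite (d (proj1_sig a) (proj1_sig b))))).

Definition delta_isometry {X Y : Type} (dX : X -> X -> R) (dY : Y -> Y -> R)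
  (del : R) (i : X -> Y) : Prop :=
  Rbar_lt
    (rbar_max (hausdorff dY (fun y => exists x, y = i x) (fun _ => True))
              (sup_over (fun p : X * X =>
                 Finite (Rabs (dY (i (fst p)) (i (snd p)) - dX (fst p) (snd p))))))
    (Finite del).

Definition dGH0 {X Y : Type} (dX : X -> X -> R) (dY : Y -> Y -> R)
  (f : X -> X) (g : Y -> Y) : Rbar :=
  Rbar_glb (fun r => exists del : R, r = Finite del /\ 0 < del /\
    exists (i : X -> Y) (j : Y -> X),
      delta_isometry dX dY del i /\ delta_isometry dY dX del j /\
      Rbar_lt (sup_over (fun x => Finite (dY (g (i x)) (i (f x))))) (Finite del) /\
      Rbar_lt (sup_over (fun y => Finite (dX (j (g y)) (f (j y))))) (Finite del)).

Definition top_stable_point {X : Type} (d : X -> X -> R) (f : X -> X) (x : X) : Prop :=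
  forall eps, 0 < eps -> exists del, 0 < del /\
    forall g : X -> X, homeomorphism d g -> Rbar_le (dC0 d f g) (Finite del) ->
      exists h : X -> X,
        continuous_on d d (closure d (orbit g x)) h /\
        (forall z, closure d (orbit g x) z -> f (h z) = h (g z)) /\
        (forall z, closure d (orbit g x) z -> d (h z) z <= eps).

Definition GH_stable_point {X : Type} (d : X -> X -> R) (f : X -> X) (x : X) : Prop :=
  forall eps, 0 < eps -> exists del, 0 < del /\
    forall (Y : Type) (dY : Y -> Y -> R), is_metric dY -> compact_metric dY ->
    forall g : Y -> Y, homeomorphism dY g -> Rbar_lt (dGH0 d dY f g) (Finite del) ->
      exists j : Y -> X, delta_isometry dY d eps j /\
        forall y, j y = x ->
          exists h : Y -> X,
            continuous_on dY d (closure dY (orbit g y)) h /\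
            (forall z, closure dY (orbit g y) z -> d (h z) (j z) < eps) /\
            (forall z, closure dY (orbit g y) z -> f (h z) = h (g z)).

End Defs.

(* Main.v *)
Require Import Defs.
From Stdlib Require Import Reals.
From Coquelicot Require Import Coquelicot.
From Stdlib Require Import Lra List Classical.
Open Scope R_scope.

Lemma lub_ub (E : Rbar -> Prop) x : E x -> Rbar_le x (Rbar_lub E).
Proof. intro H. unfold Rbar_lub. pose proof (proj2_sig (Rbar_ex_lub E)) as [Hub _]. exact (Hub x H). Qed.

Lemma sup_le_each {T : Type} (F : T -> R) c :
  Rbar_le (sup_over (fun t => Finite (F t))) (Finite c) -> forall t, F t <= c.
Proof.
  intros H t. unfold sup_over in H.
  pose proof (lub_ub (fun r => exists t, r = Finite (F t)) (Finite (F t)) (ex_intro _ t eq_refl)) as H1.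
  exact (Rbar_le_trans _ _ (Finite c) H1 H).
Qed.

Lemma sup_lt_each {T : Type} (F : T -> R) c :
  Rbar_lt (sup_over (fun t => Finite (F t))) (Finite c) -> forall t, F t < c.
Proof.
  intros H t. unfold sup_over in H.
  pose proof (lub_ub (fun r => exists t, r = Finite (F t)) (Finite (F t)) (ex_intro _ t eq_refl)) as H1.
  exact (Rbar_le_lt_trans _ _ (Finite c) H1 H).
Qed.

Lemma glb_lt (E : Rbar -> Prop) c :
  Rbar_lt (Rbar_glb E) (Finite c) -> exists r, E r /\ Rbar_lt r (Finite c).
Proof.
  intro H. apply NNPP; intro Hn.
  unfold Rbar_glb in H. pose proof (proj2_sig (Rbar_ex_glb E)) as [_ Hg].
  assert (Hlb : Rbar_is_lower_bound E (Finite c)).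
  { intros r Er. apply Rbar_not_lt_le. intro Hr. apply Hn. exists r; auto. }
  apply (Rbar_le_not_lt _ _ (Hg _ Hlb)). exact H.
Qed.

Lemma iso_bound {X Y : Type} (dX : X -> X -> R) (dY : Y -> Y -> R) e (j : X -> Y) :
  delta_isometry dX dY e j -> forall a b, Rabs (dY (j a) (j b) - dX a b) < e.
Proof.
  intros H a b. unfold delta_isometry, rbar_max in H.
  eapply Rbar_le_lt_trans in H.
  2: { apply lub_ub. right. reflexivity. }
  exact (sup_lt_each (fun p : X * X => Rabs (dY (j (fst p)) (j (snd p)) - dX (fst p) (snd p))) e H (a, b)).
Qed.

Definition minpos (l : list R) : R :=
  fold_right (fun r acc => if Rlt_dec 0 r then Rmin r acc else acc) 1 l.

Lemma minpos_pos l : 0 < minpos l.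
Proof.
  induction l; simpl. lra. destruct (Rlt_dec 0 a); auto.
  apply Rmin_glb_lt; auto.
Qed.

Lemma minpos_le l r : In r l -> 0 < r -> minpos l <= r.
Proof.
  induction l; simpl. tauto. intros [<- | Hi] Hr.
  - destruct (Rlt_dec 0 a); [apply Rmin_l | lra].
  - destruct (Rlt_dec 0 a); auto. eapply Rle_trans; [apply Rmin_r| auto].
Qed.

Inductive reach {X : Type} (d : X -> X -> R) (x : X) (del : R) : X -> Prop :=
| reach0 : reach d x del x
| reachS : forall y w, reach d x del y -> d y w < del -> reach d x del w.

Lemma reach_mono {X : Type} (d : X -> X -> R) x del del' w :
  del <= del' -> reach d x del w -> reach d x del' w.
Proof.
  intros Hle H. induction H. constructor. apply reachS with y; auto. lra.
Qed.

Lemma nreach_step {X : Type} (d : X -> X -> R) x del w w' :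
  is_metric d -> ~ reach d x del w -> d w w' < del -> ~ reach d x del w'.
Proof.
  intros [_ [_ [Hs _]]] Hn Hd H. apply Hn. apply reachS with w'; auto. rewrite Hs; auto.
Qed.

Definition Kset {X : Type} (d : X -> X -> R) (x : X) (w : X) : Prop :=
  forall del, 0 < del -> reach d x del w.

Lemma K_connected {X : Type} (d : X -> X -> R) (x : X) :
  is_metric d -> compact_metric d -> connected_subset d (Kset d x).
Proof.
  intros Hm Hc [U [V [HU [HV [Hcov [[a [Ka Ua]] [[b [Kb Vb]] Hdis]]]]]]].
  destruct Hm as [Hpos [Hz [Hs Ht]]].
  assert (Hm : is_metric d) by (repeat split; auto; apply Hz).
  set (Good := fun z rho => 0 < rho /\ forall w, Kset d x w -> d z w < rho -> (U w <-> U z)).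
  set (W := fun (p : X * R) w => 0 < snd p /\
     ((Kset d x (fst p) /\ Good (fst p) (4 * snd p) /\ d (fst p) w < snd p)
      \/ ~ reach d x (snd p) w)).
  destruct (Hc (X * R)%type W) as [l Hl].
  - intros p w; unfold W; intros [Hr [[Kz [Gz Hd]] | Hn]].
    + exists (snd p - d (fst p) w). split. lra.
      intros y Hy. split; auto. left. split; [exact Kz | split; [exact Gz |]].
      pose proof (Ht (fst p) w y). lra.
    + exists (snd p). split; auto. intros y Hy. split; auto. right.
      eapply nreach_step; eauto.
  - intro w; unfold W. destruct (classic (Kset d x w)) as [Kw | nKw].
    + destruct (classic (U w)) as [Uw | nUw].
      * destruct (HU w Uw) as [r0 [Hr0 Hb]].
        exists (w, r0/4). simpl. split. lra. left. split; auto. split.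
        -- split. lra. intros w' _ Hd. split; auto. intros. apply Hb. lra.
        -- rewrite (proj2 (Hz w w) eq_refl). lra.
      * assert (Vw : V w) by (destruct (Hcov w Kw); tauto).
        destruct (HV w Vw) as [r0 [Hr0 Hb]].
        exists (w, r0/4). simpl. split. lra. left. split; auto. split.
        -- split. lra. intros w' Kw' Hd. split; [|tauto]. intro Uw'.
           exfalso. apply (Hdis w' Kw' Uw'). apply Hb. lra.
        -- rewrite (proj2 (Hz w w) eq_refl). lra.
    + unfold Kset in nKw. apply not_all_ex_not in nKw as [del Hdel].
      apply imply_to_and in Hdel as [Hdel Hnr].
      exists (w, del). simpl. split; auto.
  - set (del := minpos (map snd l)).
    assert (Hdp : 0 < del) by apply minpos_pos.
    assert (Hdle : forall p, In p l -> 0 < snd p -> del <= snd p).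
    { intros p Hp Hr. apply minpos_le; auto. apply in_map; auto. }
    set (P := fun w => exists z r, In (z, r) l /\ 0 < r /\ Kset d x z /\ Good z (4 * r) /\ d z w < r /\ U z).
    set (Q := fun w => exists z r, In (z, r) l /\ 0 < r /\ Kset d x z /\ Good z (4 * r) /\ d z w < r /\ ~ U z).
    assert (HPQ : forall w, reach d x del w -> P w \/ Q w).
    { intros w Hw. destruct (Hl w) as [[z r] [Hin [Hr [[Kz [Gz Hd]] | Hn]]]]; simpl in *.
      - destruct (classic (U z)); [left | right]; exists z, r; exact (conj Hin (conj Hr (conj Kz (conj Gz (conj Hd H))))).
      - exfalso. apply Hn. apply reach_mono with del; auto. apply (Hdle (z, r)); auto. }
    assert (HnPQ : forall p q, P p -> Q q -> d p q < del -> False).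
    { intros p q [z [r [Hin [Hr [Kz [[_ Gz] [Hd Uz]]]]]]] [z' [r' [Hin' [Hr' [Kz' [[_ Gz'] [Hd' Uz']]]]]]] Hpq.
      pose proof (Hdle _ Hin Hr). pose proof (Hdle _ Hin' Hr'). simpl in *.
      destruct (Rle_dec r' r).
      - apply Uz'. apply (Gz z' Kz'); auto.
        pose proof (Ht z p z'). pose proof (Ht p q z'). pose proof (Hs q z'). lra.
      - apply Uz'. apply (Gz' z Kz); auto.
        pose proof (Ht z' q z). pose proof (Ht q p z). pose proof (Hs q p). pose proof (Hs p z). lra. }
    assert (HP : P x -> forall w, reach d x del w -> P w).
    { intros Px w Hw. induction Hw as [|y w Hy IH Hd]; auto.
      destruct (HPQ w (reachS _ _ _ _ _ Hy Hd)); auto. exfalso; eauto. }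
    assert (HQ : Q x -> forall w, reach d x del w -> Q w).
    { intros Qx w Hw. induction Hw as [|y w Hy IH Hd]; auto.
      destruct (HPQ w (reachS _ _ _ _ _ Hy Hd)); auto. exfalso.
      apply (HnPQ w y); auto. rewrite Hs; auto. }
    destruct (HPQ x (reach0 _ _ _)) as [Px | Qx].
    + destruct (HP Px b (Kb del Hdp)) as [z [r [Hin [Hr [Kz [[_ Gz] [Hd Uz]]]]]]].
      apply (Hdis b Kb); auto. apply (Gz b Kb); auto. lra.
    + destruct (HQ Qx a (Ka del Hdp)) as [z [r [Hin [Hr [Kz [[_ Gz] [Hd Uz]]]]]]].
      apply Uz. apply (Gz a Ka); auto. lra.
Qed.

Lemma reach_small {X : Type} (d : X -> X -> R) (x : X) eps :
  is_metric d -> compact_metric d -> totally_disconnected d -> 0 < eps ->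
  exists del0, 0 < del0 /\ forall w, reach d x del0 w -> d x w < eps.
Proof.
  intros Hm Hc Htd He.
  assert (Hsing : forall y, Kset d x y -> y = x).
  { intros y Ky. apply (Htd (Kset d x) (K_connected d x Hm Hc)); auto.
    intros del _. constructor. }
  destruct Hm as [Hpos [Hz [Hs Ht]]].
  assert (Hm : is_metric d) by (repeat split; auto; apply Hz).
  set (W := fun (p : X * R) w => 0 < snd p /\ (d x w < eps \/ ~ reach d x (snd p) w)).
  destruct (Hc (X * R)%type W) as [l Hl].
  - intros p w; unfold W; intros [Hr [Hd | Hn]].
    + exists (eps - d x w). split. lra. intros y Hy. split; auto. left.
      pose proof (Ht x w y). lra.
    + exists (snd p). split; auto. intros y Hy. split; auto. right.
      eapply nreach_step; eauto.
  - intro w; unfold W. destruct (Rlt_dec (d x w) eps).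
    + exists (w, 1). simpl. split. lra. auto.
    + assert (nKw : ~ Kset d x w).
      { intro Kw. apply n. rewrite (Hsing w Kw). rewrite (proj2 (Hz x x) eq_refl). lra. }
      unfold Kset in nKw. apply not_all_ex_not in nKw as [del Hdel].
      apply imply_to_and in Hdel as [Hdel Hnr].
      exists (w, del). simpl. split; auto.
  - exists (minpos (map snd l)). split. apply minpos_pos.
    intros w Hw. destruct (Hl w) as [[z r] [Hin [Hr [Hd | Hn]]]]; simpl in *; auto.
    exfalso. apply Hn. apply reach_mono with (minpos (map snd l)); auto.
    apply minpos_le; auto. apply (in_map snd l (z, r)); auto.
Qed.

Theorem corollary2p10 (X : Type) (d : X -> X -> R) :
  is_metric d -> compact_metric d -> totally_disconnected d ->
  forall x : X, top_stable_point d (fun z => z) x /\ GH_stable_point d (fun z => z) x.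
Proof.
  intros Hm Hc Htd x.
  pose proof Hm as [Hpos [Hz [Hs Ht]]].
  assert (Hcont : forall A : X -> Prop, Defs.continuous_on d d A (fun _ : X => x)).
  { intros A y _ e He. exists 1. split. lra. intros. rewrite (proj2 (Hz x x) eq_refl). lra. }
  split.
  - intros eps Heps. destruct (reach_small d x eps Hm Hc Htd Heps) as [del0 [Hd0 Hsmall]].
    exists (del0 / 2). split. lra. intros g _ Hg.
    pose proof (sup_le_each (fun z => d z (g z)) (del0/2) Hg) as Hstep.
    exists (fun _ => x). split; [apply Hcont | split; [reflexivity |]].
    intros z Hcl. simpl. left. apply Hsmall.
    assert (Hf : forall n, reach d x del0 (Nat.iter n g x)).
    { induction n; simpl. constructor. apply reachS with (Nat.iter n g x); auto.
      pose proof (Hstep (Nat.iter n g x)). lra. }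
    assert (Hb : forall n y, ~ reach d x del0 y -> ~ reach d x del0 (Nat.iter n g y)).
    { induction n; simpl; intros y Hn; auto.
      apply (nreach_step d x del0 (Nat.iter n g y)); [exact Hm | exact (IHn y Hn) |].
      pose proof (Hstep (Nat.iter n g y)). lra. }
    destruct (Hcl del0 Hd0) as [a [[n [-> | Ha]] Hda]].
    + apply reachS with (Nat.iter n g x); auto. rewrite Hs; auto.
    + apply reachS with a; [| rewrite Hs; auto].
      apply NNPP. intro Hn. apply (Hb n a Hn). rewrite Ha. constructor.
  - intros eps Heps. destruct (reach_small d x eps Hm Hc Htd Heps) as [del0 [Hd0 Hsmall]].
    exists (Rmin (del0 / 2) eps). split. apply Rmin_glb_lt; lra.
    intros Y dY HmY HcY g Hg HGH.
    destruct (glb_lt _ _ HGH) as [r [[del' [-> [Hdp [i [j [Hi [Hj [Hgi Hgj]]]]]]]] Hlt]].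
    simpl in Hlt.
    pose proof (Rmin_l (del0/2) eps). pose proof (Rmin_r (del0/2) eps).
    exists j. split.
    { unfold delta_isometry in *. eapply Rbar_lt_le_trans; [exact Hj|]. simpl. lra. }
    pose proof (sup_lt_each (fun y => d (j (g y)) (j y)) del' Hgj) as Hstep.
    pose proof (iso_bound dY d del' j Hj) as Hiso.
    destruct HmY as [_ [_ [HsY _]]].
    intros y Hy. exists (fun _ => x). split.
    { intros z0 _ e He. exists 1. split. lra. intros. rewrite (proj2 (Hz x x) eq_refl). lra. }
    split; [| intros; reflexivity].
    intros z Hcl. apply Hsmall.
    assert (Hf : forall n, reach d x del0 (j (Nat.iter n g y))).
    { induction n; simpl. rewrite Hy. constructor. apply reachS with (j (Nat.iter n g y)); auto.
      pose proof (Hstep (Nat.iter n g y)). rewrite Hs. lra. }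
    assert (Hb : forall n w, ~ reach d x del0 (j w) -> ~ reach d x del0 (j (Nat.iter n g w))).
    { induction n; simpl; intros w Hn; auto.
      apply (nreach_step d x del0 (j (Nat.iter n g w))); [exact Hm | exact (IHn w Hn) |].
      pose proof (Hstep (Nat.iter n g w)). rewrite Hs. lra. }
    destruct (Hcl (del0/2)) as [a [Horb Hda]]. lra.
    assert (Ha : reach d x del0 (j a)).
    { destruct Horb as [n [-> | Ha]]; auto.
      apply NNPP. intro Hn. apply (Hb n a Hn). rewrite Ha, Hy. constructor. }
    apply reachS with (j a); auto.
    pose proof (Hiso a z) as Hi2. apply Rabs_def2 in Hi2. rewrite (HsY a z) in Hi2. lra.
Qed.
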